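(* Let $\mathcal X\subseteq\mathcal G$ be a class of objects. Let $\mathrm{Filt}(\mathcal X)$ be the class of all $M\in\mathcal G$ admitting a chain $0=M_0\subseteq M_1\subseteq\cdots\subseteq M_k=M$ in which every $M_i$ is a strict subobject of $M$ and every quotient $M_i/M_{i-1}$ ($1\le i\le k$) is a strict quotient of some object of $\mathcal X$. Then $\mathrm{Filt}(\mathcal X)$ is a pseudo-torsion class, and it is contained in every pseudo-torsion class that contains $\mathcal X$; i.e. it is the smallest pseudo-torsion class containing $\mathcal X$.
   Context: Let $\Lambda$ be a finite dimensional algebra over a field and $\mathrm{mod}\text-\Lambda$ the category of finitely generated right $\Lambda$-modules. Fix a torsion class $\mathcal G\subseteq\mathrm{mod}\text-\Lambda$, i.e. a class of modules closed under isomorphisms, extensions and quotients. For $B\in\mathcal G$, a subobject of $B$ is a submodule of $B$ that lies in $\mathcal G$. A subobject $A\subseteq B$ is a strict subobject if $A\cap B'\in\mathcal G$ for every subobject $B'$ of $B$. A strict quotient of $B$ is $B/A$ with $A$ a strict subobject. A short exact sequence $0\to A\to B\to C\to0$ with $A,B,C\in\mathcal G$ is strict exact (and $B$ a strict extension of $A$ by $C$) if the image of $A$ is a strict subobject of $B$. A pseudo-torsion class is a nonempty class $\mathcal P\subseteq\mathcal G$ closed under strict quotients (if $A\in\mathcal P$ then every strict quotient of $A$ is in $\mathcal P$) and strict extensions (if $0\to A\to B\to C\to0$ is strict exact with $A,C\in\mathcal P$ then $B\in\mathcal P$). *)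

(* Defs.v *)
From HB Require Import structures.
From mathcomp Require Import all_boot all_order all_algebra.
From mathcomp Require Import falgebra.
Set Implicit Arguments. Unset Strict Implicit. Unset Printing Implicit Defensive.
Import GRing.Theory.
Local Open Scope ring_scope.

Section Defs.
Variables (F : fieldType) (L : falgType F).

(* A finitely generated (= finite dimensional) right L-module: the space
   of row vectors 'rV[F]_mdim, with v.a := v *m mact a. *)
Record rmod := RMod {
  mdim : nat;
  mact : L -> 'M[F]_mdim;
  mact_lin : forall (k : F) (a b : L), mact (k *: a + b) = k *: mact a + mact b;
  mact_mul : forall a b : L, mact (a * b) = mact a *m mact b;
  mact_one : mact 1 = 1%:M
}.

Definition submod (M : rmod) (U : 'M[F]_(mdim M)) : Prop :=
  forall a : L, (U *m mact M a <= U)%MS.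

(* N is isomorphic to the subquotient V/U of M (U <= V submodules of M),
   via the map x |-> x *m f (mod U). *)
Definition iso_sq (N M : rmod) (U V : 'M[F]_(mdim M)) : Prop :=
  submod U /\ submod V /\ (U <= V)%MS /\
  exists f : 'M[F]_(mdim N, mdim M),
    [/\ (f <= V)%MS,
        forall x : 'rV[F]_(mdim N), (x *m f <= U)%MS -> x = 0,
        (V <= f + U)%MS &
        forall a : L, (mact N a *m f - f *m mact M a <= U)%MS].

Arguments iso_sq N M U V : clear implicits.

Definition iso (N M : rmod) : Prop := iso_sq N M 0 1%:M.

Definition mclass := rmod -> Prop.

Definition inSQ (C : mclass) (M : rmod) (U V : 'M[F]_(mdim M)) : Prop :=
  exists N, C N /\ iso_sq N M U V.

Arguments inSQ C M U V : clear implicits.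

Definition torsion_class (G : mclass) : Prop :=
  [/\ exists M, G M,
      forall N M, iso N M -> G N -> G M,
      forall M U, submod U -> inSQ G M 0 U -> inSQ G M U 1%:M -> G M &
      forall M U, submod U -> G M -> inSQ G M U 1%:M].

Variable G : mclass.

Definition subobj (B : rmod) (A : 'M[F]_(mdim B)) : Prop :=
  submod A /\ inSQ G B 0 A.

Definition strict_subobj (B : rmod) (A : 'M[F]_(mdim B)) : Prop :=
  subobj A /\ forall B' : 'M[F]_(mdim B), subobj B' -> inSQ G B 0 (A :&: B')%MS.

Definition strict_quot (C B : rmod) : Prop :=
  G B /\ exists A : 'M[F]_(mdim B), strict_subobj A /\ iso_sq C B A 1%:M.

Definition pseudo_torsion (P : mclass) : Prop :=
  [/\ exists M, P M,
      forall M, P M -> G M,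
      forall B C, P B -> strict_quot C B -> P C &
      forall B (A : 'M[F]_(mdim B)), G B -> strict_subobj A ->
        inSQ P B 0 A -> inSQ P B A 1%:M -> P B].

Definition Filt (X : mclass) : mclass := fun M =>
  G M /\ exists (k : nat) (Ms : nat -> 'M[F]_(mdim M)),
    [/\ (Ms 0%N == (0 : 'M[F]_(mdim M)))%MS, (Ms k == 1%:M)%MS,
        forall i, (i <= k)%N -> strict_subobj (Ms i),
        forall i, (0 < i <= k)%N -> (Ms i.-1 <= Ms i)%MS &
        forall i, (0 < i <= k)%N ->
          exists N, iso_sq N M (Ms i.-1) (Ms i) /\
                    exists X0, X X0 /\ strict_quot N X0].

End Defs.

(* Main.v *)
Require Import Defs.
From mathcomp Require Import all_boot all_order all_algebra.
From mathcomp Require Import falgebra zify.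
Set Implicit Arguments. Unset Strict Implicit. Unset Printing Implicit Defensive.
Import GRing.Theory.
Local Open Scope ring_scope.



Section MX.
Variable F : fieldType.

Lemma inj_rows n m k (f : 'M[F]_(n,m)) (U : 'M_m) :
  (forall x : 'rV_n, (x *m f <= U)%MS -> x = 0) ->
  forall W : 'M_(k,n), (W *m f <= U)%MS -> W = 0.
Proof.
move=> H W HW; apply/row_matrixP => i; rewrite row0; apply: H.
by rewrite -row_mul; apply: submx_trans (row_sub i _) HW.
Qed.

Lemma inj_free n m (f : 'M[F]_(n,m)) (U : 'M_m) :
  (forall x : 'rV_n, (x *m f <= U)%MS -> x = 0) -> row_free f.
Proof.
move=> H; apply: inj_row_free => v Hv; apply: H; by rewrite Hv sub0mx.
Qed.

Lemma inj_cap n m (f : 'M[F]_(n,m)) (U : 'M_m) :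
  (forall x : 'rV_n, (x *m f <= U)%MS -> x = 0) -> (f :&: U)%MS = 0.
Proof.
move=> H; apply/eqP; rewrite -submx0.
have Hf : ((f :&: U)%MS <= f)%MS by apply: capmxSl.
have E := mulmxKpV Hf.
have Z : (f :&: U)%MS *m pinvmx f = 0.
  apply: (inj_rows H); rewrite E; exact: capmxSr.
by rewrite -E Z mul0mx.
Qed.

Definition gmx n m (f : 'M[F]_(n,m)) (U : 'M_m) := proj_mx <<f>>%MS U *m pinvmx f.

Section G.
Variables (n m : nat) (f : 'M[F]_(n,m)) (U : 'M[F]_m).
Hypotheses (ff : row_free f) (fU : (f :&: U)%MS = 0).

Let fU' : (<<f>> :&: U)%MS = 0.
Proof. apply/eqP; rewrite -submx0 -fU; apply: capmxS => //; by rewrite genmxE. Qed.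

Lemma g_fg k (Y : 'M_(k,n)) : Y *m f *m gmx f U = Y.
Proof.
rewrite /gmx -(mulmxA Y) (mulmxA f) (proj_mx_id fU'); last by rewrite genmxE. by rewrite mulmxVp // mulmx1.
Qed.

Lemma g_gf k (W : 'M_(k,m)) : (W <= f + U)%MS -> (W *m gmx f U *m f - W <= U)%MS.
Proof.
move=> HW; rewrite /gmx mulmxA mulmxKpV; last by apply: (submx_trans (proj_mx_sub _ _ _)); rewrite genmxE.
rewrite -opprB eqmx_opp proj_mx_compl_sub //; apply: (submx_trans HW); apply: addsmxS => //; by rewrite genmxE.
Qed.

Lemma g_U k (W : 'M_(k,m)) : (W <= U)%MS -> W *m gmx f U = 0.
Proof. by move=> HW; rewrite /gmx mulmxA proj_mx_0 // mul0mx. Qed.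

End G.
End MX.

Lemma tele (V : zmodType) (a b c : V) : (a - b) + (b - c) = a - c.
Proof. by rewrite addrA subrK. Qed.

Lemma cong_sub (F : fieldType) k n m (A B : 'M[F]_(k,n)) (C : 'M[F]_(m,n)) :
  (A - B <= C)%MS -> (B <= C)%MS -> (A <= C)%MS.
Proof. by move=> h1 h2; rewrite -(subrK B A); apply: addmx_sub. Qed.

Lemma opp_sub (F : fieldType) k n m (A : 'M[F]_(k,n)) (C : 'M[F]_(m,n)) :
  (- A <= C)%MS = (A <= C)%MS.
Proof. by rewrite eqmx_opp. Qed.

Section MOD.
Variables (F : fieldType) (L : falgType F).
Local Notation rmod := (rmod L).

Lemma submod0 (M : rmod) : submod (0 : 'M_(mdim M)).
Proof. by move=> a; rewrite mul0mx sub0mx. Qed.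

Lemma submod1 (M : rmod) : submod (1%:M : 'M_(mdim M)).
Proof. by move=> a; rewrite submx1. Qed.

Lemma submod_eq (M : rmod) (U U' : 'M_(mdim M)) : (U :=: U')%MS -> submod U -> submod U'.
Proof. by move=> e H a; rewrite -(eqmxMr _ e) -e. Qed.

Lemma submodM (M : rmod) (U : 'M_(mdim M)) k (Y : 'M_(k, mdim M)) a :
  submod U -> (Y <= U)%MS -> (Y *m mact M a <= U)%MS.
Proof. by move=> H HY; apply: submx_trans (submxMr _ HY) (H a). Qed.

Lemma submodD (M : rmod) (U W : 'M_(mdim M)) : submod U -> submod W -> submod (U + W)%MS.
Proof. by move=> hU hW a; rewrite addsmxMr; apply: addsmxS. Qed.

Lemma submodI (M : rmod) (U W : 'M_(mdim M)) : submod U -> submod W -> submod (U :&: W)%MS.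
Proof. by move=> hU hW a; apply: submx_trans (capmxMr _ _ _) _; apply: capmxS. Qed.

Lemma iso_sq_eq N (M : rmod) (U V U' V' : 'M_(mdim M)) :
  iso_sq N U V -> (U :=: U')%MS -> (V :=: V')%MS -> iso_sq N U' V'.
Proof.
move=> [hU [hV [hUV [f [h1 h2 h3 h4]]]]] eU eV.
split; first exact: submod_eq eU hU.
split; first exact: submod_eq eV hV.
split; first by rewrite -eU -eV.
exists f; split.
- by rewrite -eV.
- by move=> x; rewrite -eU; apply: h2.
- by rewrite -eV (adds_eqmx (eqmx_refl f) (eqmx_sym eU)).
- by move=> a; rewrite -eU.
Qed.

Lemma inSQ_eq (C : mclass L) (M : rmod) (U V U' V' : 'M_(mdim M)) :
  inSQ C U V -> (U :=: U')%MS -> (V :=: V')%MS -> inSQ C U' V'.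
Proof. by move=> [N [HN HI]] eU eV; exists N; split => //; apply: iso_sq_eq eU eV. Qed.

Lemma iso_sq_refl (M : rmod) : iso_sq M (0 : 'M_(mdim M)) 1%:M.
Proof.
split; first exact: submod0. split; first exact: submod1. split; first exact: sub0mx.
exists 1%:M; split.
- exact: submx1.
- by move=> x; rewrite mulmx1 submx0 => /eqP.
- exact: addsmxSl.
- by move=> a; rewrite mulmx1 mul1mx subrr sub0mx.
Qed.


Definition isoF (N M : rmod) (U V : 'M[F]_(mdim M)) (f : 'M[F]_(mdim N, mdim M)) : Prop :=
  submod U /\ submod V /\ (U <= V)%MS /\
  [/\ (f <= V)%MS, forall x : 'rV[F]_(mdim N), (x *m f <= U)%MS -> x = 0,
      (V <= f + U)%MS & forall a, (mact N a *m f - f *m mact M a <= U)%MS].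

Arguments isoF N {M} U V f.

Lemma iso_sqE (N M : rmod) (U V : 'M[F]_(mdim M)) : iso_sq N U V -> exists f, isoF N U V f.
Proof. by move=> [a [b [c [f H]]]]; exists f. Qed.

Lemma iso_sqI (N M : rmod) (U V : 'M[F]_(mdim M)) f : isoF N U V f -> iso_sq N U V.
Proof. by move=> [a [b [c H]]]; do 3 (split => //); exists f. Qed.

Section TR.
Variables (N M : rmod) (U V : 'M[F]_(mdim M)) (f : 'M[F]_(mdim N, mdim M)).
Hypothesis Hf : isoF N U V f.
Let hU : submod U. Proof. by case: Hf. Qed.
Let hV : submod V. Proof. by case: Hf => _ []. Qed.
Let hUV : (U <= V)%MS. Proof. by case: Hf => _ [_ []]. Qed.
Let h1 : (f <= V)%MS. Proof. by case: Hf => _ [_ [_ []]]. Qed.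
Let h2 : forall x : 'rV[F]_(mdim N), (x *m f <= U)%MS -> x = 0. Proof. by case: Hf => _ [_ [_ []]]. Qed.
Let h3 : (V <= f + U)%MS. Proof. by case: Hf => _ [_ [_ []]]. Qed.
Let h4 : forall a, (mact N a *m f - f *m mact M a <= U)%MS. Proof. by case: Hf => _ [_ [_ []]]. Qed.

Local Notation g := (gmx f U).
Let ff := inj_free h2.
Let fU := inj_cap h2.

Lemma t_fg k (Y : 'M[F]_(k, mdim N)) : Y *m f *m g = Y.
Proof. exact: (g_fg ff fU). Qed.
Lemma t_gf k (W : 'M[F]_(k, mdim M)) : (W <= V)%MS -> (W *m g *m f - W <= U)%MS.
Proof. move=> HW; exact: (g_gf (submx_trans HW h3)). Qed.
Lemma t_gU k (W : 'M[F]_(k, mdim M)) : (W <= U)%MS -> W *m g = 0.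
Proof. exact: (g_U fU). Qed.

Lemma t_fmod k (Y : 'M[F]_(k, mdim N)) a :
  (Y *m mact N a *m f - Y *m f *m mact M a <= U)%MS.
Proof. by rewrite -!mulmxA -mulmxBr; apply: mulmx_sub (h4 a). Qed.

Lemma t_gmod k (Y : 'M[F]_(k, mdim M)) a : (Y <= V)%MS ->
  Y *m mact M a *m g = Y *m g *m mact N a.
Proof.
move=> HY; apply/eqP; rewrite -subr_eq0; apply/eqP; apply: (inj_rows h2).
rewrite mulmxBl -(tele (Y *m mact M a *m g *m f) (Y *m mact M a)).
rewrite -(tele (Y *m mact M a) (Y *m g *m f *m mact M a)).
apply: addmx_sub; first exact: t_gf (submodM a hV HY).
apply: addmx_sub.
  by rewrite -opprB opp_sub -mulmxBl; apply: submodM (t_gf HY).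
by rewrite -opprB opp_sub; apply: t_fmod.
Qed.

Definition phi (W : 'M[F]_(mdim N)) : 'M[F]_(mdim M) := (W *m f + U)%MS.
Definition psi (Z : 'M[F]_(mdim M)) : 'M[F]_(mdim N) := <<Z *m g>>%MS.

Lemma phi_ge W : (U <= phi W)%MS.
Proof. exact: addsmxSr. Qed.
Lemma phi_le W : (phi W <= V)%MS.
Proof. rewrite addsmx_sub hUV andbT; exact: submx_trans (submxMl _ _) h1. Qed.
Lemma phiS W1 W2 : (W1 <= W2)%MS -> (phi W1 <= phi W2)%MS.
Proof. by move=> H; apply: addsmxS => //; apply: submxMr. Qed.
Lemma phi_eq W1 W2 : (W1 :=: W2)%MS -> (phi W1 :=: phi W2)%MS.
Proof. by move=> e; apply/eqmxP/andP; split; apply: phiS; rewrite e. Qed.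

Lemma sub_phi k (Z : 'M[F]_(k, mdim M)) W : (Z <= V)%MS -> (Z *m g <= W)%MS -> (Z <= phi W)%MS.
Proof.
move=> HZ HW; apply: (cong_sub (B := Z *m g *m f)).
  rewrite -opprB opp_sub; exact: submx_trans (t_gf HZ) (phi_ge W).
by apply: submx_trans (addsmxSl _ _); apply: submxMr.
Qed.

Lemma phi_sub_g k (Z : 'M[F]_(k, mdim M)) W : (Z <= phi W)%MS -> (Z *m g <= W)%MS.
Proof.
move=> HZ; have := submxMr g HZ.
by rewrite addsmxMr (t_gU (submx_refl U)) t_fg addsmx0.
Qed.

Lemma sub_psi k (Y : 'M[F]_(k, mdim N)) Z : (Y *m f <= Z)%MS -> (Y <= psi Z)%MS.
Proof. by move=> H; rewrite genmxE -[Y]t_fg; apply: submxMr. Qed.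

Lemma psi_sub k (Y : 'M[F]_(k, mdim N)) Z : (U <= Z)%MS -> (Z <= V)%MS ->
  (Y <= psi Z)%MS -> (Y *m f <= Z)%MS.
Proof.
move=> h h' H; rewrite genmxE in H; apply: submx_trans (submxMr f H) _.
apply: (cong_sub (B := Z)) => //; exact: submx_trans (t_gf h') h.
Qed.

Lemma psi_phi W : (psi (phi W) :=: W)%MS.
Proof.
apply/eqmxP/andP; split; first by rewrite genmxE; apply: phi_sub_g.
apply: sub_psi; exact: addsmxSl.
Qed.

Lemma phi_psi Z : (U <= Z)%MS -> (Z <= V)%MS -> (phi (psi Z) :=: Z)%MS.
Proof.
move=> h h'; apply/eqmxP/andP; split.
  by rewrite addsmx_sub h andbT; apply: psi_sub.
by apply: sub_phi => //; rewrite genmxE.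
Qed.

Lemma psiS Z1 Z2 : (Z1 <= Z2)%MS -> (psi Z1 <= psi Z2)%MS.
Proof. by move=> H; rewrite !genmxE submxMr. Qed.
Lemma psi_eq Z1 Z2 : (Z1 :=: Z2)%MS -> (psi Z1 :=: psi Z2)%MS.
Proof. by move=> e; apply/eqmxP/andP; split; apply: psiS; rewrite e. Qed.

Lemma phiI W1 W2 : (phi (W1 :&: W2) :=: phi W1 :&: phi W2)%MS.
Proof.
apply/eqmxP/andP; split.
  by rewrite sub_capmx !phiS ?capmxSl ?capmxSr.
apply: sub_phi; first exact: submx_trans (capmxSl _ _) (phi_le _).
by rewrite sub_capmx !phi_sub_g ?capmxSl ?capmxSr.
Qed.

Lemma phi0 : (phi 0 :=: U)%MS.
Proof. by rewrite /phi mul0mx; apply: adds0mx. Qed.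
Lemma phi1 : (phi 1%:M :=: V)%MS.
Proof. by apply/eqmxP/andP; split; [exact: phi_le | rewrite /phi mul1mx]. Qed.
Lemma psiU : (psi U :=: (0 : 'M[F]_(mdim N)))%MS.
Proof. by rewrite /psi (t_gU (submx_refl U)) genmx0; apply: eqmx_refl. Qed.
Lemma psiV : (psi V :=: 1%:M)%MS.
Proof.
apply/eqmxP/andP; split; first exact: submx1.
by apply: sub_psi; rewrite mul1mx.
Qed.

Lemma submod_phi W : submod W -> submod (phi W).
Proof.
move=> hW a; rewrite /phi addsmxMr addsmx_sub; apply/andP; split; last first.
  exact: submx_trans (hU a) (addsmxSr _ _).
apply: (cong_sub (B := W *m mact N a *m f)).
  rewrite -opprB opp_sub; exact: submx_trans (t_fmod _ _) (addsmxSr _ _).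
by apply: submx_trans (addsmxSl _ _); apply: submxMr (hW a).
Qed.

Lemma submod_psi Z : (Z <= V)%MS -> submod Z -> submod (psi Z).
Proof.
move=> h hZ a; rewrite /psi (eqmxMr _ (genmxE _)) genmxE -(t_gmod _ h).
exact: submxMr (hZ a).
Qed.

Lemma iso_phi K W1 W2 : iso_sq K W1 W2 -> iso_sq K (phi W1) (phi W2).
Proof.
move=> [hW1 [hW2 [h12 [h [k1 k2 k3 k4]]]]].
split; first exact: submod_phi. split; first exact: submod_phi.
split; first exact: phiS.
exists (h *m f); split.
- by apply: submx_trans (addsmxSl _ _); apply: submxMr.
- move=> x; rewrite mulmxA => Hx; apply: k2; have := phi_sub_g Hx; by rewrite t_fg.
- rewrite addsmx_sub; apply/andP; split.
    apply: submx_trans (submxMr f k3) _; rewrite addsmxMr; apply: addsmxS => //.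
    exact: addsmxSl.
  exact: submx_trans (addsmxSr (W1 *m f) U) (addsmxSr _ _).
- move=> a; rewrite mulmxA -(tele (mact K a *m h *m f) (h *m mact N a *m f)).
  apply: addmx_sub; last exact: submx_trans (t_fmod _ _) (addsmxSr _ _).
  by rewrite -mulmxBl; apply: submx_trans (addsmxSl _ _); apply: submxMr.
Qed.

Lemma iso_psi K Z1 Z2 : (U <= Z1)%MS -> (Z2 <= V)%MS -> iso_sq K Z1 Z2 ->
  iso_sq K (psi Z1) (psi Z2).
Proof.
move=> hU1 hV2 [hZ1 [hZ2 [h12 [h [k1 k2 k3 k4]]]]].
have hV1 : (Z1 <= V)%MS by exact: submx_trans h12 hV2.
have hhV : (h <= V)%MS by exact: submx_trans k1 hV2.
split; first exact: submod_psi. split; first exact: submod_psi.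
split; first exact: psiS.
exists (h *m g); split.
- by rewrite genmxE; apply: submxMr.
- move=> x Hx; apply: k2.
  have Hxh : (x *m h <= V)%MS := submx_trans (submxMl _ _) hhV.
  rewrite mulmxA in Hx; apply: (cong_sub (B := x *m h *m g *m f)).
    rewrite -opprB opp_sub; exact: submx_trans (t_gf Hxh) hU1.
  exact: psi_sub Hx.
- rewrite /psi genmxE; apply: submx_trans (submxMr g k3) _; rewrite addsmxMr.
  by apply: addsmxS => //; rewrite genmxE.
- move=> a; rewrite mulmxA -(t_gmod a hhV) -mulmxBl genmxE; exact: submxMr (k4 a).
Qed.

Lemma inSQ_phi (C : mclass L) W1 W2 : inSQ C W1 W2 -> inSQ C (phi W1) (phi W2).
Proof. by move=> [K [HK HI]]; exists K; split => //; apply: iso_phi. Qed.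

Lemma inSQ_psi (C : mclass L) Z1 Z2 : (U <= Z1)%MS -> (Z2 <= V)%MS ->
  inSQ C Z1 Z2 -> inSQ C (psi Z1) (psi Z2).
Proof. by move=> a b [K [HK HI]]; exists K; split => //; apply: iso_psi. Qed.

End TR.
End MOD.



Section SQ.
Variables (F : fieldType) (L : falgType F).
Local Notation rmod := (rmod L).

Lemma SQ_exists (M : rmod) (U V : 'M[F]_(mdim M)) :
  submod U -> submod V -> (U <= V)%MS -> exists N : rmod, iso_sq N U V.
Proof.
move=> hU hV hUV.
set B := row_base (V :\: U)%MS.
have fB : row_free B := row_base_free _.
have BU : (B :&: U)%MS = 0.
  apply/eqP; rewrite -submx0 -(capmx_diff V U); apply: capmxS => //; by rewrite eq_row_base.
have BV : (B <= V)%MS by rewrite eq_row_base diffmxSl.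
have VBU : (V <= B + U)%MS.
  have : ((V :\: U + V :&: U)%MS <= B + U)%MS.
    by apply: addsmxS; [rewrite eq_row_base | exact: capmxSr].
  by rewrite (addsmx_diff_cap_eq V U).
set P := gmx B U.
have lin : forall (k : F) (a b : L), B *m mact M (k *: a + b) *m P =
    k *: (B *m mact M a *m P) + B *m mact M b *m P.
  by move=> k a b; rewrite mact_lin mulmxDr mulmxDl -(scalemxAr k B) -(scalemxAl k (B *m mact M a)).
have mul : forall a b : L, B *m mact M (a * b) *m P =
    (B *m mact M a *m P) *m (B *m mact M b *m P).
  move=> a b; rewrite mact_mul mulmxA (mulmxA (B *m mact M a *m P) (B *m mact M b) P) (mulmxA (B *m mact M a *m P) B (mact M b)).
  have HY : (B *m mact M a <= V)%MS := submodM a hV BV.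
  have E := g_gf (submx_trans HY VBU).
  have -> : B *m mact M a *m P *m B =
     (B *m mact M a *m P *m B - B *m mact M a) + B *m mact M a by rewrite subrK.
  have Z : (B *m mact M a *m P *m B - B *m mact M a) *m mact M b *m P = 0 by exact: (g_U BU (submodM b hU E)). by rewrite mulmxDl mulmxDl Z add0r.
have one : B *m mact M 1 *m P = 1%:M.
  by rewrite mact_one mulmx1; have := g_fg fB BU 1%:M; rewrite mul1mx.
pose N := @RMod F L _ (fun a => B *m mact M a *m P) lin mul one. exists N.
refine (@iso_sqI F L N M U V B _). split => //; split => //; split => //; split => //=.
- move=> x HxB; apply/eqP; rewrite -(mulmx_free_eq0 _ fB) -submx0 -BU sub_capmx submxMl HxB //.
- move=> a; exact: g_gf (submx_trans (submodM a hV BV) VBU).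
Qed.

End SQ.

Section ISO2.
Variables (F : fieldType) (L : falgType F).
Local Notation rmod := (rmod L).

Lemma zero_iso (Z M1 M2 : rmod) (U : 'M[F]_(mdim M1)) (U' : 'M[F]_(mdim M2)) :
  iso_sq Z U U -> submod U' -> iso_sq Z U' U'.
Proof.
move=> /iso_sqE [f [_ [_ [_ [h1 h2 _ _]]]]] hU'.
have x0 : forall x : 'rV[F]_(mdim Z), x = 0.
  by move=> x; apply: h2; apply: submx_trans (submxMl _ _) h1.
apply: (@iso_sqI F L Z M2 U' U' 0); do 3 (split => //); split.
- exact: sub0mx.
- by move=> x _; apply: x0.
- exact: addsmxSr.
- by move=> a; rewrite mulmx0 mul0mx subrr sub0mx.
Qed.

Lemma zero_inSQ (C : mclass L) (M1 M2 : rmod) (U : 'M[F]_(mdim M1)) (U' : 'M[F]_(mdim M2)) :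
  inSQ C U U -> submod U' -> inSQ C U' U'.
Proof. by move=> [Z [HZ HI]] hU'; exists Z; split => //; apply: zero_iso HI hU'. Qed.

Lemma ISO2a (K M : rmod) (U V W : 'M[F]_(mdim M)) :
  submod U -> submod W -> (U <= V)%MS ->
  iso_sq K (V :&: (U + W))%MS V -> iso_sq K (U + W)%MS (V + W)%MS.
Proof.
move=> hU hW hUV /iso_sqE [f [hI [hV [_ [h1 h2 h3 h4]]]]].
apply: (@iso_sqI F L K M _ _ f); split; first exact: submodD.
split; first exact: submodD.
split; first exact: addsmxS.
split.
- exact: submx_trans h1 (addsmxSl _ _).
- move=> x Hx; apply: h2; rewrite sub_capmx Hx andbT.
  exact: submx_trans (submxMl _ _) h1.
- rewrite addsmx_sub; apply/andP; split.
    apply: submx_trans h3 _; apply: addsmxS => //; exact: capmxSr.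
  exact: submx_trans (addsmxSr U W) (addsmxSr _ _).
- move=> a; exact: submx_trans (h4 a) (capmxSr _ _).
Qed.

Lemma ISO2b (K M : rmod) (U V W : 'M[F]_(mdim M)) :
  submod V -> submod W ->
  iso_sq K (U + W)%MS (V + W)%MS -> iso_sq K (V :&: (U + W))%MS V.
Proof.
move=> hV hW /iso_sqE [f [hUW [_ [_ [h1 h2 h3 h4]]]]].
have DW : ((V :\: W) :&: W)%MS = 0 := capmx_diff V W.
have VW : (V + W <= (V :\: W) + W)%MS.
  rewrite addsmx_sub addsmxSr andbT.
  have : ((V :\: W + V :&: W)%MS <= V :\: W + W)%MS.
    by apply: addsmxS => //; exact: capmxSr.
  by rewrite (addsmx_diff_cap_eq V W).
set h := f *m proj_mx (V :\: W)%MS W.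
have hV' : (h <= V)%MS by apply: submx_trans (proj_mx_sub _ _ _) (diffmxSl _ _).
have hfW : (f - h <= W)%MS by apply: proj_mx_compl_sub; apply: submx_trans h1 VW.
have hfUW : (f - h <= U + W)%MS by apply: submx_trans hfW (addsmxSr _ _).
apply: (@iso_sqI F L K M _ _ h); split; first exact: submodI.
split => //. split; first exact: capmxSl.
split => //.
- move=> x; rewrite sub_capmx => /andP [_ Hx]; apply: h2.
  apply: (cong_sub (B := x *m h)) => //.
  by rewrite -mulmxBr; apply: mulmx_sub.
- have : (V <= f + (U + W))%MS.
    exact: submx_trans (addsmxSl V W) h3.
  case/sub_addsmxP => c Ev.
  rewrite -[X in (X <= _)%MS](subrK (c.1 *m h)) addsmxC; apply: addmx_sub_adds; last exact: submxMl.
  rewrite sub_capmx; apply/andP; split.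
    apply: addmx_sub => //; rewrite opp_sub; apply: submx_trans (submxMl _ _) hV'.
  have -> : V - c.1 *m h = c.1 *m (f - h) + c.2 *m (U + W)%MS.
    by rewrite {1}Ev mulmxBr addrAC.
  by apply: addmx_sub; [apply: mulmx_sub | apply: submxMl].
- move=> a; rewrite sub_capmx; apply/andP; split.
    apply: addmx_sub; first exact: submx_trans (submxMl _ _) hV'.
    by rewrite opp_sub; apply: submodM.
  rewrite -(tele (mact K a *m h) (mact K a *m f)) -(tele (mact K a *m f) (f *m mact M a)).
  apply: addmx_sub.
    by rewrite -mulmxBr -opprB mulmxN opp_sub; apply: mulmx_sub.
  apply: addmx_sub; first exact: h4.
  by rewrite -mulmxBl; apply: submodM.
Qed.

End ISO2.



Section TG.
Variables (F : fieldType) (L : falgType F).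
Local Notation rmod := (rmod L).

Lemma inSQ_sm (C : mclass L) (M : rmod) (U V : 'M[F]_(mdim M)) :
  inSQ C U V -> [/\ submod U, submod V & (U <= V)%MS].
Proof. by move=> [K [_ [a [b [c _]]]]]. Qed.

Lemma ISO2a_inSQ (C : mclass L) (M : rmod) (U V W : 'M[F]_(mdim M)) :
  submod U -> submod W -> (U <= V)%MS ->
  inSQ C (V :&: (U + W))%MS V -> inSQ C (U + W)%MS (V + W)%MS.
Proof. by move=> a b c [K [HK HI]]; exists K; split => //; apply: ISO2a. Qed.

Lemma ISO2b_inSQ (C : mclass L) (M : rmod) (U V W : 'M[F]_(mdim M)) :
  submod V -> submod W ->
  inSQ C (U + W)%MS (V + W)%MS -> inSQ C (V :&: (U + W))%MS V.
Proof. by move=> a b [K [HK HI]]; exists K; split => //; apply: ISO2b. Qed.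

Variable G : mclass L.
Hypothesis tG : torsion_class G.
Let Giso : forall N M : rmod, iso N M -> G N -> G M. Proof. by case: tG. Qed.
Let Gext : forall (M : rmod) (U : 'M[F]_(mdim M)), submod U -> inSQ G 0 U -> inSQ G U 1%:M -> G M.
Proof. by case: tG. Qed.
Let Gquot : forall (M : rmod) (U : 'M[F]_(mdim M)), submod U -> G M -> inSQ G U 1%:M.
Proof. by case: tG. Qed.

Lemma GinSQ (M : rmod) : G M -> inSQ G (0 : 'M[F]_(mdim M)) 1%:M.
Proof. by move=> HM; exists M; split => //; apply: iso_sq_refl. Qed.

Lemma inSQG (M : rmod) : inSQ G (0 : 'M[F]_(mdim M)) 1%:M -> G M.
Proof. by move=> [N [HN HI]]; apply: Giso HI HN. Qed.

Lemma TGext (M : rmod) (U W V : 'M[F]_(mdim M)) :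
  inSQ G U W -> inSQ G W V -> inSQ G U V.
Proof.
move=> H1 H2; have [hU hW hUW] := inSQ_sm H1; have [_ hV hWV] := inSQ_sm H2.
have hUV := submx_trans hUW hWV.
have [N HN] := SQ_exists hU hV hUV.
have [f Hf] := iso_sqE HN.
have A1 := inSQ_psi Hf (submx_refl U) hWV H1.
have A2 := inSQ_psi Hf hUW (submx_refl V) H2.
have GN : G N.
  apply: (Gext (submod_psi Hf hWV hW)).
    exact: inSQ_eq A1 (psiU Hf) (eqmx_refl _).
  exact: inSQ_eq A2 (eqmx_refl _) (psiV Hf).
by exists N.
Qed.

Lemma TGquot (M : rmod) (U W V : 'M[F]_(mdim M)) :
  submod W -> (U <= W)%MS -> (W <= V)%MS -> inSQ G U V -> inSQ G W V.
Proof.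
move=> hW hUW hWV [N [GN HN]].
have [f Hf] := iso_sqE HN.
have H := Gquot (submod_psi Hf hWV hW) GN.
have H' := inSQ_phi Hf H.
exact: (inSQ_eq H' (phi_psi Hf hUW hWV) (phi1 Hf)).
Qed.

Lemma Gzero (M : rmod) : G M -> forall (M2 : rmod) (U : 'M[F]_(mdim M2)),
  submod U -> inSQ G U U.
Proof.
move=> HM M2 U hU; apply: zero_inSQ _ hU.
exact: TGquot (submod1 M) (sub0mx _ _) (submx_refl _) (GinSQ HM).
Qed.

Lemma Q1 (M : rmod) (A Y : 'M[F]_(mdim M)) :
  submod A -> inSQ G 0 Y -> inSQ G A (Y + A)%MS.
Proof.
move=> hA H; have [h0 hY _] := inSQ_sm H.
have H1 : inSQ G (Y :&: ((0 : 'M[F]_(mdim M)) + A))%MS Y.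
  apply: (TGquot _ _ _ H); [exact: submodI (submodD h0 hA) | exact: sub0mx | exact: capmxSl].
have := ISO2a_inSQ h0 hA (sub0mx _ _) H1.
by move/inSQ_eq; apply => //; apply: adds0mx.
Qed.


Lemma strict_eq (M : rmod) (A A' : 'M[F]_(mdim M)) :
  (A :=: A')%MS -> strict_subobj G A -> strict_subobj G A'.
Proof.
move=> e [[hA HA] S]; split.
  split; [exact: submod_eq e hA | exact: inSQ_eq HA (eqmx_refl _) e].
move=> B' HB'; exact: inSQ_eq (S B' HB') (eqmx_refl _) (cap_eqmx e (eqmx_refl _)).
Qed.

Lemma strict1 (M : rmod) : G M -> strict_subobj G (1%:M : 'M[F]_(mdim M)).
Proof.
move=> HM; split; first by split; [exact: submod1 | exact: GinSQ].
by move=> B' [_ HB']; rewrite cap1mx.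
Qed.

Lemma strict0 (M : rmod) : G M -> strict_subobj G (0 : 'M[F]_(mdim M)).
Proof.
move=> HM; split; first by split; [exact: submod0 | refine (Gzero HM _); exact: submod0].
by move=> B' _; rewrite cap0mx; refine (Gzero HM _); exact: submod0.
Qed.

Lemma strict_sub (N M : rmod) (A : 'M[F]_(mdim M)) f (W : 'M[F]_(mdim N)) :
  @isoF F L N M 0 A f -> strict_subobj G A -> strict_subobj G W ->
  strict_subobj G (phi 0 f W).
Proof.
move=> Hf [[hA HA] SA] [[hW HW] SW].
have e0 := phi0 (0 : 'M[F]_(mdim M)) f.
split.
  split; first exact: (submod_phi Hf hW).
  exact: inSQ_eq (inSQ_phi Hf HW) e0 (eqmx_refl _).
move=> B' [hB' HB'].
set D := (A :&: B')%MS.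
have HD : inSQ G 0 D := SA B' (conj hB' HB').
have hD : submod D := submodI hA hB'.
have DA : (D <= A)%MS := capmxSl _ _.
have HpD : inSQ G 0 (psi 0 f D).
  exact: inSQ_eq (inSQ_psi Hf (submx_refl 0) DA HD) (psiU Hf) (eqmx_refl _).
have H := SW _ (conj (submod_psi Hf DA hD) HpD).
have H' := inSQ_phi Hf H.
apply: inSQ_eq H' e0 _.
apply: eqmx_trans (phiI Hf _ _) _.
have E := phi_psi Hf (sub0mx _ D) DA.
apply/eqmxP/andP; split; rewrite sub_capmx capmxSl /=.
  by apply: submx_trans (capmxSr _ _) _; rewrite E; exact: capmxSr.
rewrite E /D sub_capmx capmxSr andbT.
exact: submx_trans (capmxSl _ _) (phi_le Hf _).
Qed.

Lemma strict_pre (N M : rmod) (U : 'M[F]_(mdim M)) f (W : 'M[F]_(mdim N)) :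
  @isoF F L N M U 1%:M f -> strict_subobj G U -> strict_subobj G W ->
  strict_subobj G (phi U f W).
Proof.
move=> Hf [[hU HU] SU] [[hW HW] SW].
have HUW : inSQ G U (phi U f W) := inSQ_eq (inSQ_phi Hf HW) (phi0 _ _) (eqmx_refl _).
split; first by split; [exact: (submod_phi Hf hW) | exact: TGext HU HUW].
move=> B' [hB' HB'].
set Y := (phi U f W :&: B')%MS.
have hPW := submod_phi Hf hW.
have hY : submod Y := submodI hPW hB'.
have UPW : (U <= phi U f W)%MS := phi_ge _ _ _.
have H1 : inSQ G U (B' + U)%MS := Q1 hU HB'.
have hBU : submod (B' + U)%MS := submodD hB' hU.
have Hp : inSQ G 0 (psi U f (B' + U)%MS).
  exact: (inSQ_eq (inSQ_psi Hf (submx_refl U) (submx1 _) H1) (psiU Hf) (eqmx_refl _)).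
have H2 := SW _ (conj (submod_psi Hf (submx1 _) hBU) Hp).
have H3 := inSQ_phi Hf H2.
have H4 : inSQ G U (Y + U)%MS.
  apply: inSQ_eq H3 (phi0 _ _) _.
  apply: eqmx_trans (phiI Hf _ _) _.
  refine (eqmx_trans _ (eqmx_sym (matrix_modr B' UPW))).
  exact: cap_eqmx (eqmx_refl _) (phi_psi Hf (addsmxSr _ _) (submx1 _)).
have H5 := ISO2b_inSQ (U := (0 : 'M[F]_(mdim M))) hY hU (inSQ_eq H4 (eqmx_sym (adds0mx _ U)) (eqmx_refl _)).
have H6 : inSQ G 0 (Y :&: ((0 : 'M[F]_(mdim M)) + U))%MS.
  apply: inSQ_eq (SU B' (conj hB' HB')) (eqmx_refl _) _.
  apply/eqmxP/andP; split; rewrite !sub_capmx.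
    rewrite adds0mx capmxSl capmxSr !andbT.
    exact: submx_trans (capmxSl _ _) UPW.
  apply/andP; split.
    by apply: submx_trans (capmxSr _ _) _; rewrite adds0mx.
  exact: submx_trans (capmxSl _ _) (capmxSr _ _).
exact: TGext H6 H5.
Qed.

Lemma strict_psi (N M : rmod) (U V : 'M[F]_(mdim M)) f (Z : 'M[F]_(mdim M)) :
  @isoF F L N M U V f -> (U <= Z)%MS -> (Z <= V)%MS -> submod Z -> inSQ G U Z ->
  (forall D : 'M[F]_(mdim M), submod D -> (U <= D)%MS -> (D <= V)%MS ->
     inSQ G U D -> inSQ G U (Z :&: D)%MS) ->
  strict_subobj G (psi U f Z).
Proof.
move=> Hf UZ ZV hZ HZ HD.
split.
  split; first exact: (submod_psi Hf ZV hZ).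
  exact: inSQ_eq (inSQ_psi Hf (submx_refl U) ZV HZ) (psiU Hf) (eqmx_refl _).
move=> B' [hB' HB'].
have H1 : inSQ G U (phi U f B') := inSQ_eq (inSQ_phi Hf HB') (phi0 _ _) (eqmx_refl _).
have H2 := HD _ (submod_phi Hf hB') (phi_ge _ _ _) (phi_le Hf _) H1.
have ZDV : (Z :&: phi U f B' <= V)%MS := submx_trans (capmxSl _ _) ZV.
have H3 := inSQ_psi Hf (submx_refl U) ZDV H2.
apply: inSQ_eq H3 (psiU Hf) _.
have E : (Z :&: phi U f B' :=: phi U f (psi U f Z :&: B'))%MS.
  exact: eqmx_trans (cap_eqmx (eqmx_sym (phi_psi Hf UZ ZV)) (eqmx_refl _)) (eqmx_sym (phiI Hf _ _)).
exact: eqmx_trans (psi_eq _ _ E) (psi_phi Hf _).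
Qed.

End TG.



Section MAIN.
Variables (F : fieldType) (L : falgType F).
Local Notation rmod := (rmod L).
Variables (G X : mclass L).
Hypothesis tG : torsion_class G.
Hypothesis XG : forall M, X M -> G M.

Definition SQX : mclass L := fun N => exists X0, X X0 /\ strict_quot G N X0.

Lemma facE (M : rmod) (U V : 'M[F]_(mdim M)) :
  (exists N, iso_sq N U V /\ exists X0, X X0 /\ strict_quot G N X0) <-> inSQ SQX U V.
Proof. by split => [[N [H1 H2]] | [N [H1 H2]]]; exists N. Qed.

Lemma inSQ_mono (C D : mclass L) (M : rmod) (U V : 'M[F]_(mdim M)) :
  (forall N, C N -> D N) -> inSQ C U V -> inSQ D U V.
Proof. by move=> H [N [HN HI]]; exists N; split => //; apply: H. Qed.

Lemma eqP' (M : rmod) (U V : 'M[F]_(mdim M)) : (U == V)%MS -> (U :=: V)%MS.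
Proof. by move/eqmxP. Qed.

Lemma zero_one (Z M : rmod) (U : 'M[F]_(mdim M)) : iso_sq Z U U -> (1%:M : 'M[F]_(mdim Z)) = 0.
Proof.
move=> /iso_sqE [f [_ [_ [_ [h1 h2 _ _]]]]].
apply: (inj_rows h2); exact: submx_trans (submxMl _ _) h1.
Qed.

Lemma filt_nonempty : exists M, Filt G X M.
Proof.
have [B0 GB0] : exists M, G M by case: tG.
have [Z [GZ HZ]] := TGquot tG (submod1 B0) (sub0mx _ _) (submx_refl _) (GinSQ GB0).
exists Z; split => //; exists 0%N, (fun _ => 0); split.
- by apply/andP; split.
- by rewrite (zero_one HZ); apply/andP; split.
- by move=> i _; apply: strict0.
- by move=> i /andP [H1 H2]; move: (leq_trans H1 H2).
- by move=> i /andP [H1 H2]; move: (leq_trans H1 H2).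
Qed.

Lemma filt_min (P : mclass L) : pseudo_torsion G P -> (forall M, X M -> P M) ->
  forall M, Filt G X M -> P M.
Proof.
move=> [[B0 PB0] PG Pq Pe] XP M [GM [k [m [m0 mk ms mm mf]]]].
have GB0 := PG _ PB0.
have PS : forall (N : rmod), SQX N -> P N.
  by move=> N [X0 [HX0 HQ]]; apply: (Pq X0) => //; apply: XP.
have IH : forall i, (i <= k)%N -> inSQ P 0 (m i).
  elim => [_ | i IHi Hik].
    have [Z HZ] := SQ_exists (submod1 B0) (submod1 B0) (submx_refl _).
    have PZ : P Z by apply: (Pq B0) => //; split => //; exists 1%:M; split => //; exact: strict1.
    have H : inSQ P (1%:M : 'M[F]_(mdim B0)) 1%:M by exists Z.
    have := zero_inSQ H (submod0 M).
    by move/inSQ_eq; apply; [exact: eqmx_refl | exact: eqmx_sym (eqP' m0)].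
  have Hik' : (i <= k)%N by exact: ltnW.
  have IH := IHi Hik'.
  have [[hmi Hmi] Smi] := ms i Hik'.
  have [[hmi1 Hmi1] Smi1] := ms i.+1 Hik.
  have mono : (m i <= m i.+1)%MS by apply: (mm i.+1); rewrite Hik.
  have fac := mf i.+1 (Hik : (0 < i.+1 <= k)%N).
  have [N HN] := SQ_exists (submod0 M) hmi1 (sub0mx _ _).
  have [f Hf] := iso_sqE HN.
  have GN : G N.
    apply: (inSQG tG).
    have := inSQ_psi Hf (submx_refl 0) (submx_refl _) Hmi1.
    by move/inSQ_eq; apply; [exact: psiU Hf | exact: psiV Hf].
  have SA : strict_subobj G (psi 0 f (m i)).
    apply: (strict_psi Hf (sub0mx _ _) mono hmi Hmi).
    by move=> D hD _ _ HD; apply: Smi.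
  have PN : P N.
    apply: (Pe N _ GN SA).
      have := inSQ_psi Hf (submx_refl 0) mono IH.
      by move/inSQ_eq; apply; [exact: psiU Hf | exact: eqmx_refl].
    have := inSQ_psi Hf (sub0mx _ _) (submx_refl _) (inSQ_mono PS (proj1 (facE _ _) fac)).
    by move/inSQ_eq; apply; [exact: eqmx_refl | exact: psiV Hf].
  by exists N.
have [K [PK HK]] : inSQ P (0 : 'M[F]_(mdim M)) 1%:M.
  by have := IH k (leqnn k); move/inSQ_eq; apply; [exact: eqmx_refl | exact: eqP' mk].
have [f Hf] := iso_sqE HK.
apply: (Pq K) => //; split; first exact: PG.
exists 0; split; first exact: (strict0 tG (PG _ PK)).
have := iso_psi Hf (submx_refl 0) (submx_refl _) (iso_sq_refl M).
by move/iso_sq_eq; apply; [exact: psiU Hf | exact: psiV Hf].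
Qed.


Lemma FQ (B : rmod) (A m' m : 'M[F]_(mdim B)) :
  strict_subobj G A -> strict_subobj G m' -> strict_subobj G m -> (m' <= m)%MS ->
  inSQ SQX m' m -> inSQ SQX (m' + A)%MS (m + A)%MS.
Proof.
move=> SA Sm' Sm hmono Hf'.
have [[hA HA] SA'] := SA.
have [[hm' Hm'] _] := Sm'.
have [[hm Hm] _] := Sm.
set E := (m :&: (m' + A))%MS.
have hE : submod E := submodI hm (submodD hm' hA).
have m'E : (m' <= E)%MS by rewrite sub_capmx hmono addsmxSl.
have Em : (E <= m)%MS := capmxSl _ _.
apply: (ISO2a_inSQ hm' hA hmono).
have [N [[X0 [HX0 [GX0 [Y [SY HY]]]]] HN]] := Hf'.
have [f1 Hf1] := iso_sqE HN.
have EE : (E :=: m' + (A :&: m))%MS.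
  rewrite /E capmxC; exact: eqmx_sym (matrix_modl A hmono).
have HAm : inSQ G 0 (A :&: m)%MS := SA' m (conj hm Hm).
have HmE : inSQ G m' E.
  have := Q1 tG hm' HAm.
  move/inSQ_eq; apply; first exact: eqmx_refl.
  rewrite addsmxC; exact: eqmx_sym EE.
have SW : strict_subobj G (psi m' f1 E).
  apply: (strict_psi Hf1 m'E Em hE HmE).
  move=> D hD m'D Dm HD.
  have GD : inSQ G 0 D := TGext tG Hm' HD.
  have HAD : inSQ G 0 (A :&: D)%MS := SA' D (conj hD GD).
  have := Q1 tG hm' HAD.
  move/inSQ_eq; apply; first exact: eqmx_refl.
  rewrite addsmxC; apply: eqmx_trans (matrix_modl A m'D) _.
  apply/eqmxP/andP; split; rewrite !sub_capmx.
    rewrite capmxSr capmxSl !andbT.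
    exact: submx_trans (capmxSr _ _) Dm.
  rewrite capmxSr andbT; exact: submx_trans (capmxSl _ _) (capmxSr _ _).
have [N2 HN2] := SQ_exists (submod_psi Hf1 Em hE) (submod1 N) (submx1 _).
have SQX2 : SQX N2.
  exists X0; split => //; split => //.
  have [f0 Hf0] := iso_sqE HY.
  exists (phi Y f0 (psi m' f1 E)); split; first exact: (strict_pre tG Hf0 SY SW).
  have := iso_phi Hf0 HN2.
  by move/iso_sq_eq; apply; [exact: eqmx_refl | exact: phi1 Hf0].
exists N2; split => //.
have := iso_phi Hf1 HN2.
by move/iso_sq_eq; apply; [exact: (phi_psi Hf1 m'E Em) | exact: (phi1 Hf1)].
Qed.

Lemma filt_quot (B C : rmod) : Filt G X B -> strict_quot G C B -> Filt G X C.
Proof.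
move=> [GB [k [m [m0 mk ms mm mf]]]] [_ [A [SA HC]]].
have [[hA HA] SA'] := SA.
have [f Hf] := iso_sqE HC.
have GC : G C.
  apply: (inSQG tG).
  have H := TGquot tG hA (sub0mx _ _) (submx1 _) (GinSQ GB).
  have := inSQ_psi Hf (submx_refl A) (submx_refl _) H.
  by move/inSQ_eq; apply; [exact: psiU Hf | exact: psiV Hf].
split => //; exists k, (fun i => psi A f (m i + A)%MS); split.
- apply/eqmxP; apply: eqmx_trans _ (psiU Hf); apply: psi_eq.
  apply: eqmx_trans (adds_eqmx (eqP' m0) (eqmx_refl A)) _; exact: adds0mx.
- apply/eqmxP; apply: eqmx_trans _ (psiV Hf); apply: psi_eq.
  apply: eqmx_trans (adds_eqmx (eqP' mk) (eqmx_refl A)) _.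
  by apply/addsmx_idPl; exact: submx1.
- move=> i Hi; have [[hmi Hmi] Smi] := ms i Hi.
  apply: (strict_psi Hf (addsmxSr _ _) (submx1 _) (submodD hmi hA) (Q1 tG hA Hmi)).
  move=> D hD AD _ HD.
  have GD : inSQ G 0 D := TGext tG HA HD.
  have H := Q1 tG hA (Smi D (conj hD GD)).
  apply: inSQ_eq H (eqmx_refl _) _.
  rewrite [(m i :&: D)%MS]capmxC [((m i + A) :&: D)%MS]capmxC.
  exact: (matrix_modr (m i) AD).
- move=> i Hi; apply: psiS; apply: addsmxS => //; exact: mm.
- move=> i Hi; apply/facE.
  have Hi' : (i <= k)%N := (andP Hi).2.
  have Hi1 : (i.-1 <= k)%N := leq_trans (leq_pred i) Hi'.
  have H := FQ SA (ms _ Hi1) (ms _ Hi') (mm _ Hi) (proj1 (facE _ _) (mf _ Hi)).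
  exact: (inSQ_psi Hf (addsmxSr _ _) (submx1 _) H).
Qed.


Lemma filt_ext (B : rmod) (A : 'M[F]_(mdim B)) : G B -> strict_subobj G A ->
  inSQ (Filt G X) 0 A -> inSQ (Filt G X) A 1%:M -> Filt G X B.
Proof.
move=> GB SA [NA [[GNA [ka [a [a0 ak aS aM aF]]]] HA]] [NC [[GNC [kc [c [c0 ck cS cM cF]]]] HC]].
have [fA HfA] := iso_sqE HA.
have [fC HfC] := iso_sqE HC.
pose Ms i := if (i < ka)%N then phi 0 fA (a i) else phi A fC (c (i - ka)%N).
have phiA1 : (phi 0 fA 1%:M :=: A)%MS := phi1 HfA.
have phiC0 : (phi A fC 0 :=: A)%MS := phi0 A fC.
have Aka : (phi 0 fA (a ka) :=: A)%MS := eqmx_trans (phi_eq _ _ (eqP' ak)) phiA1.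
have Cc0 : (phi A fC (c 0%N) :=: A)%MS := eqmx_trans (phi_eq _ _ (eqP' c0)) phiC0.
split => //; exists (ka + kc)%N, Ms; split.
- rewrite /Ms /=; case: ifP => H.
    apply/eqmxP; exact: eqmx_trans (phi_eq _ _ (eqP' a0)) (phi0 _ _).
  have ka0 : ka = 0%N by move: H; rewrite lt0n => /negbFE/eqP.
  apply/eqmxP; rewrite sub0n; apply: eqmx_trans Cc0 _.
  apply: eqmx_trans (eqmx_sym Aka) _; rewrite ka0.
  exact: eqmx_trans (phi_eq _ _ (eqP' a0)) (phi0 _ _).
- rewrite /Ms /= ltnNge leq_addr /= addKn.
  apply/eqmxP; exact: eqmx_trans (phi_eq _ _ (eqP' ck)) (phi1 HfC).
- move=> i Hi; rewrite /Ms /=; case: ifP => H.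
    exact: (strict_sub HfA SA (aS i (ltnW H))).
  apply: (strict_pre tG HfC SA (cS _ _)); rewrite leq_subLR; exact Hi.
- move=> i /andP [Hi0 Hik]; rewrite /Ms /=.
  case: (ltnP i ka) => H1.
    have H2 : (i.-1 < ka)%N by lia.
    rewrite H2; apply: phiS; apply: aM; apply/andP; split; lia.
  case: (ltnP i.-1 ka) => H2.
    exact: submx_trans (phi_le HfA _) (phi_ge _ _ _).
  apply: phiS.
  have E : (i.-1 - ka = (i - ka).-1)%N by lia.
  rewrite E; apply: cM; apply/andP; split; lia.
- move=> i /andP [Hi0 Hik]; apply/facE; rewrite /Ms /=.
  case: (ltnP i ka) => H1.
    have H2 : (i.-1 < ka)%N by lia.
    rewrite H2.
    apply: (inSQ_phi HfA (proj1 (facE _ _) (aF i _))); apply/andP; split; lia.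
  case: (ltnP i.-1 ka) => H2.
    have Eik : i = ka by lia.
    rewrite Eik subnn.
    have Hka : (0 < ka <= ka)%N by apply/andP; split; lia.
    have := inSQ_phi HfA (proj1 (facE _ _) (aF ka Hka)).
    by move/inSQ_eq; apply; [exact: eqmx_refl | exact: eqmx_trans Aka (eqmx_sym Cc0)].
  have E : (i.-1 - ka = (i - ka).-1)%N by lia.
  rewrite E.
  apply: (inSQ_phi HfC (proj1 (facE _ _) (cF (i - ka)%N _))); apply/andP; split; lia.
Qed.

End MAIN.

Theorem mainTheorem10 (F : fieldType) (L : falgType F) (G : mclass L)
    (X : mclass L) :
  torsion_class G -> (forall M, X M -> G M) ->
  pseudo_torsion G (Filt G X) /\
  (forall P : mclass L, pseudo_torsion G P -> (forall M, X M -> P M) ->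
     forall M, Filt G X M -> P M).
Proof.
move=> tG XG; split.
  split.
  - exact: (@filt_nonempty F L G X tG).
  - by move=> M [].
  - by move=> B C HB HC; apply: (filt_quot tG HB HC).
  - by move=> B A GB SA H1 H2; apply: (filt_ext tG GB SA H1 H2).
exact: (filt_min tG).
Qed.
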